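(* Let $R$ be a commutative Noetherian ring and $\phi\colon\mathbb{Z}\to\mathsf{P}(\operatorname{Spec}(R))$ an sp-filtration satisfying the weak Cousin condition. Then there exists an integer $j_0$ such that $\phi(j)=\phi(j_0)$ for all $j\le j_0$, and the subset $\phi(j_0)\subset\operatorname{Spec}(R)$ is open and closed. Also, the set $\bigcap_{i\in\mathbb{Z}}\phi(i)$ is open and closed.
   Context: An sp-filtration is a decreasing map $\phi\colon\mathbb{Z}\to\mathsf{P}(\operatorname{Spec}(R))$ (i.e. $\phi(i)\supset\phi(i+1)$) whose values are subsets stable under specialization. $\phi$ satisfies the weak Cousin condition if for every $j\in\mathbb{Z}$ and primes ${\mathfrak p}\subsetneq{\mathfrak q}$ with no prime strictly between them, ${\mathfrak q}\in\phi(j)$ implies ${\mathfrak p}\in\phi(j-1)$. Topology on $\operatorname{Spec}(R)$ is the Zariski topology. *)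

(* Defs.v *)
From HB Require Import structures.
From mathcomp Require Import all_boot all_order all_algebra.
From mathcomp Require Import classical_sets.
Set Implicit Arguments. Unset Strict Implicit. Unset Printing Implicit Defensive.
Import GRing.Theory Num.Theory.
Local Open Scope ring_scope.
Local Open Scope classical_set_scope.

Definition is_ideal (R : comPzRingType) (I : set R) : Prop :=
  I 0 /\ (forall a b, I a -> I b -> I (a + b)) /\ (forall r a, I a -> I (r * a)).

Definition is_prime_ideal (R : comPzRingType) (P : set R) : Prop :=
  is_ideal P /\ ~ P 1 /\ (forall a b, P (a * b) -> P a \/ P b).

Definition noetherian (R : comPzRingType) : Prop :=
  forall I : nat -> set R, (forall n, is_ideal (I n)) ->
    (forall n, I n `<=` I n.+1) ->
    exists N, forall n, (N <= n)%N -> I n = I N.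

Definition Spec (R : comPzRingType) := {P : set R | is_prime_ideal P}.
Definition pt (R : comPzRingType) (p : Spec R) : set R := proj1_sig p.

Definition zariski_closed (R : comPzRingType) (S : set (Spec R)) : Prop :=
  exists I : set R, S = [set p | I `<=` pt p].
Definition zariski_open (R : comPzRingType) (S : set (Spec R)) : Prop :=
  zariski_closed (~` S).
Definition zariski_clopen (R : comPzRingType) (S : set (Spec R)) : Prop :=
  zariski_open S /\ zariski_closed S.

Definition specialization_closed (R : comPzRingType) (S : set (Spec R)) : Prop :=
  forall p q : Spec R, S p -> pt p `<=` pt q -> S q.

Definition sp_filtration (R : comPzRingType) (phi : int -> set (Spec R)) : Prop :=
  (forall i, specialization_closed (phi i)) /\ (forall i, phi (i + 1) `<=` phi i).

Definition saturated_pair (R : comPzRingType) (p q : Spec R) : Prop :=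
  pt p `<` pt q /\ ~ (exists r : Spec R, pt p `<` pt r /\ pt r `<` pt q).

Definition weak_cousin (R : comPzRingType) (phi : int -> set (Spec R)) : Prop :=
  forall (j : int) (p q : Spec R), saturated_pair p q -> phi j q -> phi (j - 1) p.

(* Main.v *)
Require Import Defs.
From HB Require Import structures.
From mathcomp Require Import all_boot all_order all_algebra.
From mathcomp Require Import perm boolp classical_sets.
From Stdlib Require List.
Import Order.TTheory GRing.Theory Num.Theory.
Local Open Scope ring_scope.
Local Open Scope classical_set_scope.
Set Implicit Arguments. Unset Strict Implicit. Unset Printing Implicit Defensive.
Lemma id0 (R : comPzRingType) (I : set R) : is_ideal I -> I 0.
Proof. by case. Qed.
Lemma idD (R : comPzRingType) (I : set R) a b : is_ideal I -> I a -> I b -> I (a + b).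
Proof. by move=> [_ [H _]]; apply: H. Qed.
Lemma idM (R : comPzRingType) (I : set R) r a : is_ideal I -> I a -> I (r * a).
Proof. by move=> [_ [_ H]]; apply: H. Qed.
Lemma idMr (R : comPzRingType) (I : set R) r a : is_ideal I -> I a -> I (a * r).
Proof. by move=> hI ha; rewrite mulrC; apply: idM. Qed.
Lemma idN (R : comPzRingType) (I : set R) a : is_ideal I -> I a -> I (- a).
Proof. by move=> hI ha; rewrite -mulN1r; apply: idM. Qed.
Lemma idB (R : comPzRingType) (I : set R) a b : is_ideal I -> I a -> I b -> I (a - b).
Proof. by move=> hI ha hb; apply: idD => //; apply: idN. Qed.
Lemma id_sum (R : comPzRingType) (I : set R) m (F : 'I_m -> R) :
  is_ideal I -> (forall i, I (F i)) -> I (\sum_(i < m) F i).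
Proof. by move=> hI hF; elim/big_ind: _ => //; [exact: id0 | move=> x y; apply: idD]. Qed.
Lemma id_setT (R : comPzRingType) : is_ideal (@setT R).
Proof. by []. Qed.
Lemma id_1 (R : comPzRingType) (I : set R) x : is_ideal I -> I 1 -> I x.
Proof. by move=> hI h1; rewrite -(mulr1 x); apply: idM. Qed.

Lemma prime_ideal (R : comPzRingType) (P : set R) : is_prime_ideal P -> is_ideal P.
Proof. by case. Qed.
Lemma prime_1 (R : comPzRingType) (P : set R) : is_prime_ideal P -> ~ P 1.
Proof. by case=> _ []. Qed.
Lemma prime_mul (R : comPzRingType) (P : set R) a b :
  is_prime_ideal P -> P (a * b) -> P a \/ P b.
Proof. by case=> _ [_ H]; apply: H. Qed.
Lemma prime_mulN (R : comPzRingType) (P : set R) a b :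
  is_prime_ideal P -> ~ P a -> ~ P b -> ~ P (a * b).
Proof. by move=> hP ha hb /(prime_mul hP) []. Qed.
Lemma prime_pow (R : comPzRingType) (P : set R) a n :
  is_prime_ideal P -> P (a ^+ n) -> P a.
Proof.
move=> hP; elim: n => [|n IH]; first by rewrite expr0 => /(prime_1 hP).
by rewrite exprS => /(prime_mul hP) [] // /IH.
Qed.
Lemma prime_prodN (R : comPzRingType) (P : set R) m (F : 'I_m -> R) :
  is_prime_ideal P -> (forall i, ~ P (F i)) -> ~ P (\prod_(i < m) F i).
Proof.
move=> hP hF; elim/big_ind: _ => //; first exact: prime_1.
by move=> x y; apply: prime_mulN.
Qed.
Lemma prod_in (R : comPzRingType) (I : set R) m (F : 'I_m -> R) i0 :
  is_ideal I -> I (F i0) -> I (\prod_(i < m) F i).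
Proof. by move=> hI h; rewrite (bigD1 i0) //=; apply: idMr. Qed.

Lemma max_elem (R : comPzRingType) (F : set R -> Prop) (I0 : set R) :
  noetherian R -> is_ideal I0 -> F I0 ->
  exists I, [/\ is_ideal I, F I, I0 `<=` I &
    forall J, is_ideal J -> F J -> I `<=` J -> J `<=` I].
Proof.
move=> N hI0 hF0.
set Goal := (exists I, _).
case: (pselect Goal) => [//|Hn]; exfalso.
pose G I := [/\ is_ideal I, F I & I0 `<=` I].
have step : forall I, exists J, G I -> G J /\ I `<=` J /\ ~ J `<=` I.
  move=> I; case: (pselect (G I)) => [[hI hF hs]|nG]; last by exists I.
  case: (pselect (exists J, G J /\ I `<=` J /\ ~ J `<=` I)) => [[J hJ]|Hno].
    by exists J.
  exfalso; apply: Hn; exists I; split => // J hJ hFJ hIJ.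
  case: (pselect (J `<=` I)) => // nJI; exfalso; apply: Hno; exists J.
  by split => //; split => //; apply: subset_trans hIJ.
have [f hf] := choice step.
pose s n := iter n f I0.
have Gs : forall n, G (s n).
  elim=> [|n IH]; first by split.
  by have [] := hf (s n) IH.
have [M hM] := N s (fun n => let: And3 h _ _ := Gs n in h)
  (fun n => (hf (s n) (Gs n)).2.1).
have := (hf (s M) (Gs M)).2.2; apply.
have -> : f (s M) = s M.+1 by [].
by rewrite (hM M.+1 (leqnSn M)).
Qed.
Definition spanA (R : comPzRingType) (A : set R) m (g : 'I_m -> R) : set R :=
  [set x | exists c : 'I_m -> R, (forall j, A (c j)) /\ x = \sum_(j < m) c j * g j].

Lemma spanA_ideal (R : comPzRingType) (A : set R) m (g : 'I_m -> R) :
  is_ideal A -> is_ideal (spanA A g).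
Proof.
move=> hA; split; last split.
- exists (fun _ => 0); split => [j|]; first exact: id0.
  by rewrite big1 // => j _; rewrite mul0r.
- move=> a b [c1 [h1 ->]] [c2 [h2 ->]]; exists (fun j => c1 j + c2 j); split.
    by move=> j; apply: idD.
  by rewrite -big_split /=; apply: eq_bigr => j _; rewrite mulrDl.
- move=> r a [c [h ->]]; exists (fun j => r * c j); split.
    by move=> j; apply: idM.
  by rewrite mulr_sumr; apply: eq_bigr => j _; rewrite mulrA.
Qed.

Lemma spanA_gen (R : comPzRingType) (A : set R) m (g : 'I_m -> R) j :
  A 1 -> A 0 -> spanA A g (g j).
Proof.
move=> h1 h0; exists (fun i => if i == j then 1 else 0); split.
  by move=> i; case: ifP.
rewrite (bigD1 j) //= eqxx mul1r big1 ?addr0 // => i /negbTE ->.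
by rewrite mul0r.
Qed.

Lemma span_gen (R : comPzRingType) m (g : 'I_m -> R) j : spanA setT g (g j).
Proof. exact: spanA_gen. Qed.

Lemma spanA_sub (R : comPzRingType) (A I : set R) m (g : 'I_m -> R) :
  is_ideal I -> (forall j, I (g j)) -> spanA A g `<=` I.
Proof.
move=> hI hg x [c [_ ->]]; apply: id_sum => // j; exact: idM.
Qed.

Lemma spanA_mono (R : comPzRingType) (A B : set R) m (g : 'I_m -> R) :
  A `<=` B -> spanA A g `<=` spanA B g.
Proof. by move=> AB x [c [hc ->]]; exists c; split => // j; apply: AB. Qed.

Definition extf (R : Type) m (g : 'I_m -> R) (x : R) : 'I_m.+1 -> R :=
  fun i => if unlift ord_max i is Some j then g j else x.

Lemma extf_lift (R : Type) m (g : 'I_m -> R) x j : extf g x (lift ord_max j) = g j.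
Proof. by rewrite /extf liftK. Qed.
Lemma extf_max (R : Type) m (g : 'I_m -> R) x : extf g x ord_max = x.
Proof. by rewrite /extf unlift_none. Qed.

Lemma sum_ext (R : comPzRingType) m (c g : 'I_m -> R) a x :
  \sum_(i < m.+1) extf c a i * extf g x i = \sum_(i < m) c i * g i + a * x.
Proof.
rewrite big_ord_recr /= extf_max extf_max; congr (_ + _).
apply: eq_bigr => i _.
have -> : widen_ord (leqnSn m) i = lift ord_max i by apply: val_inj; rewrite /= /bump leqNgt ltn_ord.
by rewrite !extf_lift.
Qed.

Lemma span_ext (R : comPzRingType) m (g : 'I_m -> R) x :
  spanA setT g `<=` spanA setT (extf g x) /\ spanA setT (extf g x) x.
Proof.
split.
  move=> y [c [_ ->]]; exists (extf c 0); split => //.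
  by rewrite sum_ext mul0r addr0.
have := @span_gen R _ (extf g x) ord_max; by rewrite extf_max.
Qed.

Lemma noeth_fg (R : comPzRingType) (I : set R) :
  noetherian R -> is_ideal I ->
  exists m (g : 'I_m -> R), (forall j, I (g j)) /\ I = spanA setT g.
Proof.
move=> N hI.
pose F K := exists m (g : 'I_m -> R), (forall j, I (g j)) /\ K = spanA setT g.
have g0 : 'I_0 -> R by case.
have [K [hK [m [g [hg ->]]] _ Kmax]] :=
  @max_elem R F (spanA setT g0) N (spanA_ideal g0 (@id_setT R))
   (ex_intro _ 0%N (ex_intro _ g0 (conj (fun j : 'I_0 => False_ind _ (notF (ltn_ord j))) erefl))).
exists m, g; split => //; rewrite eqEsubset; split; last exact: spanA_sub.
move=> x Ix; have [sub xin] := span_ext g x.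
have FJ : F (spanA setT (extf g x)).
  exists m.+1, (extf g x); split => //.
  by move=> j; rewrite /extf; case: (unlift ord_max j) => [j1|]; [apply: hg|].
exact: (Kmax _ (spanA_ideal _ (@id_setT R)) FJ sub x xin).
Qed.
(* ---------- determinant trick (Nakayama) ---------- *)
Lemma sum_in (R : comPzRingType) (I : set R) (T : finType) (P : pred T) (F : T -> R) :
  is_ideal I -> (forall i, P i -> I (F i)) -> I (\sum_(i | P i) F i).
Proof. by move=> hI hF; elim/big_ind: _ => //; [exact: id0 | move=> x y; apply: idD]. Qed.

Lemma nak (R : comPzRingType) (p N A : set R) m (g u : 'I_m -> R)
    (c : 'I_m -> 'I_m -> R) :
  is_prime_ideal p -> is_ideal N -> A `<=` p -> (forall i, ~ p (u i)) ->
  (forall i j, A (c i j)) ->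
  (forall i, N (u i * g i - \sum_(j < m) c i j * g j)) ->
  exists d, ~ p d /\ forall j, N (d * g j).
Proof.
move=> hp hN Ap hu hc hrel.
have hpI := prime_ideal hp.
pose M : 'M[R]_m := \matrix_(i, j) ((if i == j then u i else 0) - c i j).
pose G : 'cV[R]_m := \col_(j < m) g j.
have Mrow : forall i, (M *m G) i ord0 = u i * g i - \sum_(j < m) c i j * g j.
  move=> i; rewrite !mxE.
  rewrite (eq_bigr (fun j => (if i == j then u i * g j else 0) - c i j * g j)); last first.
    by move=> j _; rewrite !mxE mulrBl; case: eqP => _ //; rewrite mul0r.
  rewrite big_split /= sumrN; congr (_ - _).
  rewrite (bigD1 i) //= eqxx big1 ?addr0 // => j.
  by rewrite eq_sym => /negbTE ->.
exists (\det M); split.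
  have split_det : \det M = \prod_i M i i + \sum_(s : 'S_m | s != 1%g) (-1) ^+ s * \prod_i M i (s i).
    rewrite /determinant (bigD1 (1%g : 'S_m)) //= odd_perm1 expr0 mul1r.
    by congr (_ + _); apply: eq_bigr => i _; rewrite perm1.
  have rest : p (\sum_(s : 'S_m | s != 1%g) (-1) ^+ s * \prod_i M i (s i)).
    apply: sum_in => // s hs; apply: idM => //.
    have [i hi] : exists i, s i != i.
      case: (pselect (exists i, s i != i)) => // nex; exfalso.
      move/negP: hs; apply; apply/eqP/permP => i; rewrite perm1.
      case: (pselect (s i = i)) => // ne; apply: False_ind; apply: nex; exists i; exact/eqP.
    apply: (prod_in (i0 := i) hpI); rewrite /M mxE eq_sym (negbTE hi) sub0r.
    by apply: idN => //; apply: Ap.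
  rewrite split_det => hin; apply: (prime_prodN hp (F := fun i => M i i)).
    move=> i; rewrite /M mxE eqxx => hb; apply: (hu i).
    by rewrite -(subrK (c i i) (u i)); apply: idD => //; apply: Ap.
  by rewrite -(addrK (\sum_(s : 'S_m | s != 1%g) (-1) ^+ s * \prod_i M i (s i)) (\prod_i M i i)); apply: idB.
move=> j.
have : ((\adj M *m (M *m G)) j ord0) = \det M * g j.
  by rewrite mulmxA mul_adj_mx mul_scalar_mx !mxE.
move=> <-; rewrite mxE; apply: sum_in => // k _; apply: idM => //.
by rewrite Mrow.
Qed.
Definition sat (R : comPzRingType) (p I : set R) : set R :=
  [set x | exists u, ~ p u /\ I (u * x)].
Definition satd (R : comPzRingType) (p I : set R) : Prop :=
  forall u x, ~ p u -> I (u * x) -> I x.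
Definition addset (R : comPzRingType) (I J : set R) : set R :=
  [set x | exists y z, [/\ I y, J z & x = y + z]].
Definition colon (R : comPzRingType) (I : set R) (h : R) : set R :=
  [set y | I (y * h)].
Definition mulset (R : comPzRingType) (h : R) : set R := [set x | exists r, x = r * h].

Lemma sat_ideal (R : comPzRingType) (p I : set R) :
  is_prime_ideal p -> is_ideal I -> is_ideal (sat p I).
Proof.
move=> hp hI; split; last split.
- by exists 1; split; [exact: prime_1 | rewrite mulr0; exact: id0].
- move=> x y [u [hu hx]] [v [hv hy]]; exists (u * v); split.
    exact: prime_mulN.
  have -> : u * v * (x + y) = v * (u * x) + u * (v * y).
    by rewrite mulrDr !mulrA (mulrC u v).
  by apply: idD => //; apply: idM.
- move=> r x [u [hu hx]]; exists u; split => //.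
  by rewrite mulrCA; apply: idM.
Qed.

Lemma sub_sat (R : comPzRingType) (p I : set R) : is_prime_ideal p -> I `<=` sat p I.
Proof. by move=> hp x hx; exists 1; split; [exact: prime_1|rewrite mul1r]. Qed.

Lemma sat_satd (R : comPzRingType) (p I : set R) : is_prime_ideal p -> satd p (sat p I).
Proof.
move=> hp u x hu [v [hv hx]]; exists (v * u); split; first exact: prime_mulN.
by rewrite -mulrA.
Qed.

Lemma sat_min (R : comPzRingType) (p I J : set R) :
  satd p J -> I `<=` J -> sat p I `<=` J.
Proof. by move=> hJ IJ x [u [hu hx]]; apply: (hJ u) => //; apply: IJ. Qed.

Lemma sat_mono (R : comPzRingType) (p I J : set R) : I `<=` J -> sat p I `<=` sat p J.
Proof. by move=> IJ x [u [hu hx]]; exists u; split => //; apply: IJ. Qed.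

Lemma satd_setT (R : comPzRingType) (p : set R) : satd p setT.
Proof. by []. Qed.

Lemma satd_setI (R : comPzRingType) (p I J : set R) :
  satd p I -> satd p J -> satd p (I `&` J).
Proof. by move=> hI hJ u x hu [h1 h2]; split; [apply: hI h1|apply: hJ h2]. Qed.

Lemma id_setI (R : comPzRingType) (I J : set R) :
  is_ideal I -> is_ideal J -> is_ideal (I `&` J).
Proof.
move=> hI hJ; split; last split.
- by split; apply: id0.
- by move=> x y [? ?] [? ?]; split; apply: idD.
- by move=> r x [? ?]; split; apply: idM.
Qed.

Lemma addset_ideal (R : comPzRingType) (I J : set R) :
  is_ideal I -> is_ideal J -> is_ideal (addset I J).
Proof.
move=> hI hJ; split; last split.
- by exists 0, 0; split; [apply: id0|apply: id0|rewrite addr0].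
- move=> x y [a [b [ha hb ->]]] [c [d [hc hd ->]]].
  exists (a + c), (b + d); split; [exact: idD|exact: idD|].
  by rewrite addrACA.
- move=> r x [a [b [ha hb ->]]]; exists (r * a), (r * b); split.
  + exact: idM. + exact: idM. + by rewrite mulrDr.
Qed.

Lemma addset_l (R : comPzRingType) (I J : set R) : is_ideal J -> I `<=` addset I J.
Proof. by move=> hJ x hx; exists x, 0; split => //; [apply: id0|rewrite addr0]. Qed.
Lemma addset_r (R : comPzRingType) (I J : set R) : is_ideal I -> J `<=` addset I J.
Proof. by move=> hI x hx; exists 0, x; split => //; [apply: id0|rewrite add0r]. Qed.
Lemma addset_min (R : comPzRingType) (I J K : set R) :
  is_ideal K -> I `<=` K -> J `<=` K -> addset I J `<=` K.
Proof. by move=> hK IK JK x [y [z [hy hz ->]]]; apply: idD => //; [apply: IK|apply: JK]. Qed.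

Lemma mulset_ideal (R : comPzRingType) (h : R) : is_ideal (mulset h).
Proof.
split; last split.
- by exists 0; rewrite mul0r.
- by move=> x y [a ->] [b ->]; exists (a + b); rewrite mulrDl.
- by move=> r x [a ->]; exists (r * a); rewrite mulrA.
Qed.

Lemma colon_ideal (R : comPzRingType) (I : set R) h : is_ideal I -> is_ideal (colon I h).
Proof.
move=> hI; split; last split.
- by rewrite /colon /= mul0r; apply: id0.
- by move=> x y hx hy; rewrite /colon /= mulrDl; apply: idD.
- by move=> r x hx; rewrite /colon /= -mulrA; apply: idM.
Qed.

Definition dcc (R : comPzRingType) (s A B : set R) : Prop :=
  forall J : nat -> set R,
  (forall n, [/\ is_ideal (J n), satd s (J n), A `<=` J n & J n `<=` B]) ->
  (forall n, J n.+1 `<=` J n) -> exists N, forall n, (N <= n)%N -> J n = J N.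

Lemma chain_le (R : comPzRingType) (J : nat -> set R) :
  (forall n, J n.+1 `<=` J n) -> forall n m, (n <= m)%N -> J m `<=` J n.
Proof.
move=> hJ n m /subnK <-; elim: (m - n)%N => [|k IH]; first by rewrite add0n.
by rewrite addSn; apply: subset_trans (hJ _) IH.
Qed.

Lemma dcc_comb (R : comPzRingType) (s A B C : set R) :
  is_prime_ideal s -> is_ideal B -> satd s B -> is_ideal C -> satd s C ->
  A `<=` C -> C `<=` B -> dcc s A C -> dcc s C B -> dcc s A B.
Proof.
move=> hs hB sB hC sC AC CB d1 d2 J hJ hdec.
have [N1 h1] := d1 (fun n => J n `&` C) (fun n => let: And4 i1 i2 i3 i4 := hJ n in
   And4 (id_setI i1 hC) (satd_setI i2 sC) (fun x hx => conj (i3 x hx) (AC x hx)) (fun x hx => proj2 hx))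
  (fun n x hx => conj (hdec n x (proj1 hx)) (proj2 hx)).
have [N2 h2] := d2 (fun n => sat s (addset (J n) C)) (fun n => let: And4 i1 i2 i3 i4 := hJ n in
   And4 (sat_ideal hs (addset_ideal i1 hC)) (sat_satd (I := addset (J n) C) hs)
     (subset_trans (addset_r (J := C) i1) (sub_sat (I := addset (J n) C) hs))
     (sat_min sB (addset_min hB i4 CB)))
  (fun n => sat_mono (p := s) (addset_min (addset_ideal (let: And4 i1 _ _ _ := hJ n in i1) hC)
       (subset_trans (hdec n) (addset_l (I := J n) hC)) (addset_r (J := C) (let: And4 i1 _ _ _ := hJ n in i1)))).
exists (maxn N1 N2) => n hn.
have hN1 : (N1 <= n)%N by apply: leq_trans hn; apply: leq_maxl.
have hN2 : (N2 <= n)%N by apply: leq_trans hn; apply: leq_maxr.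
have e1 := h1 _ hN1; have e1' := h1 _ (leq_maxl N1 N2).
have e2 := h2 _ hN2; have e2' := h2 _ (leq_maxr N1 N2).
rewrite eqEsubset; split; first exact: chain_le.
move=> x hx.
have [hJn1 hJn2 _ _] := hJ n.
have [hJN1 _ _ _] := hJ (maxn N1 N2).
have : sat s (addset (J n) C) x.
  rewrite e2 -e2'; apply: sub_sat => //; apply: addset_l => //.
case=> u [hu [y [c [hy hc e]]]].
have hcJ : (J n `&` C) c.
  rewrite e1 -e1'; split => //.
  have -> : c = u * x - y by rewrite e addrC addKr.
  apply: idB => //; first exact: idM.
  by apply: (chain_le hdec hn).
apply: (hJn2 u) => //; rewrite e; apply: idD => //; exact: (proj1 hcJ).
Qed.

Lemma dcc_base (R : comPzRingType) (s A : set R) h :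
  is_prime_ideal s -> is_ideal A -> satd s A -> (forall y, s y -> A (y * h)) ->
  dcc s A (sat s (addset A (mulset h))).
Proof.
move=> hs hA sA hh J hJ hdec.
have key : forall n, J n `<=` A \/ sat s (addset A (mulset h)) `<=` J n.
  move=> n; have [i1 i2 i3 i4] := hJ n.
  case: (pselect (J n `<=` A)) => [|nsub]; first by left.
  right.
  have [y [hy nyA]] : exists y, J n y /\ ~ A y.
    case: (pselect (exists y, J n y /\ ~ A y)) => // nex; exfalso; apply: nsub => y hy.
    by case: (pselect (A y)) => // nA; exfalso; apply: nex; exists y.
  have [u [hu [a [z [ha [r ->] e]]]]] := i4 y hy.
  have hr : ~ s r.
    move=> sr; apply: nyA; apply: (sA u) => //; rewrite e; apply: idD => //; exact: hh.
  have hJh : J n h.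
    apply: (i2 r) => //.
    have -> : r * h = u * y - a by rewrite e addrC addKr.
    by apply: idB => //; [apply: idM | apply: i3].
  apply: sat_min => //; apply: addset_min => //.
  by move=> x [t ->]; apply: idM.
case: (pselect (exists N, J N `<=` A)) => [[N hN]|nex].
  exists N => n hn.
  have hn' : J n `<=` A := subset_trans (chain_le hdec hn) hN.
  have [_ _ i3 _] := hJ n; have [_ _ j3 _] := hJ N.
  rewrite eqEsubset; split; first exact: subset_trans hn' j3.
  exact: subset_trans hN i3.
exists 0%N => n _.
have hb : forall m, sat s (addset A (mulset h)) `<=` J m.
  move=> m; case: (key m) => // hm; exfalso; apply: nex; by exists m.
have [_ _ _ i4] := hJ n; have [_ _ _ j4] := hJ 0%N.
by rewrite eqEsubset; split => x hx; [apply: hb; apply: i4 | apply: hb; apply: j4].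
Qed.
Lemma assoc_prime (R : comPzRingType) (C : set R) :
  noetherian R -> is_ideal C -> ~ C 1 ->
  exists h, ~ C h /\ is_prime_ideal (colon C h).
Proof.
move=> N hC nC1.
pose F Q := exists h, ~ C h /\ Q = colon C h.
have F0 : F (colon C 1) by exists 1; split.
have [Q [hQ [h [nh ->]] _ Qmax]] := max_elem N (colon_ideal 1 hC) F0.
exists h; split => //; split; first exact: colon_ideal.
split; first by rewrite /colon /= mul1r.
move=> x y hxy; case: (pselect (colon C h x)) => [|nx]; first by left.
right.
have sub : colon C h `<=` colon C (x * h).
  by move=> z hz; rewrite /colon /= mulrCA; exact: idM.
have Fx : F (colon C (x * h)) by exists (x * h); split.
apply: (Qmax _ (colon_ideal (x * h) hC) Fx sub).
by rewrite /colon /= mulrA (mulrC y x).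
Qed.

Lemma artin (R : comPzRingType) (s T : set R) :
  noetherian R -> is_prime_ideal s -> is_ideal T -> satd s T ->
  (forall C, is_ideal C -> satd s C -> T `<=` C -> ~ C 1 ->
      exists h, ~ C h /\ forall y, s y -> C (y * h)) ->
  dcc s T setT.
Proof.
move=> N hs hT sT AP.
case: (pselect (dcc s T setT)) => // nd; exfalso.
pose F C := [/\ satd s C, T `<=` C & ~ dcc s C setT].
have [C [hC [sC TC ndC] _ Cmax]] := @max_elem R F T N hT (And3 sT (@subset_refl _ T) nd).
apply: ndC.
case: (pselect (C 1)) => [C1|nC1].
  move=> J hJ _; exists 0%N => n _.
  have all : forall m, J m = setT.
    move=> m; have [i1 _ i3 _] := hJ m; rewrite eqEsubset; split => // x _.
    by apply: (@id_1 R (J m) x i1); apply: i3.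
  by rewrite !all.
have [h [nh hh]] := AP C hC sC TC nC1.
pose C' := sat s (addset C (mulset h)).
have hC' : is_ideal C' := sat_ideal hs (addset_ideal hC (mulset_ideal h)).
have sC' : satd s C' := sat_satd (I := addset C (mulset h)) hs.
have CC' : C `<=` C'.
  exact: subset_trans (addset_l (I := C) (mulset_ideal h)) (sub_sat (I := addset C (mulset h)) hs).
case: (pselect (dcc s C' setT)) => [d'|nd'].
  apply: (dcc_comb hs (@id_setT R) (@satd_setT R s) hC' sC' CC' (fun _ _ => I) _ d').
  exact: dcc_base.
exfalso; apply: nh.
have hC'h : C' h.
  apply: sub_sat => //; apply: addset_r => //; by exists 1; rewrite mul1r.
exact: (Cmax C' hC' (And3 sC' (subset_trans TC CC') nd') CC' h hC'h).
Qed.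
Definition gen (R : comPzRingType) (S : set R) : set R :=
  [set x | forall J, is_ideal J -> S `<=` J -> J x].
Lemma gen_ideal (R : comPzRingType) (S : set R) : is_ideal (gen S).
Proof.
split; last split.
- by move=> J hJ _; exact: id0.
- by move=> x y hx hy J hJ SJ; apply: idD => //; [apply: hx|apply: hy].
- by move=> r x hx J hJ SJ; apply: idM => //; apply: hx.
Qed.
Lemma gen_sub (R : comPzRingType) (S : set R) : S `<=` gen S.
Proof. by move=> x hx J _ SJ; apply: SJ. Qed.
Lemma gen_min (R : comPzRingType) (S J : set R) : is_ideal J -> S `<=` J -> gen S `<=` J.
Proof. by move=> hJ SJ x hx; apply: hx. Qed.

Definition prodset (R : comPzRingType) (I J : set R) : set R :=
  [set x | exists a b, [/\ I a, J b & x = a * b]].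
Fixpoint ipow (R : comPzRingType) (I : set R) (n : nat) : set R :=
  if n is n'.+1 then gen (prodset I (ipow I n')) else setT.

Lemma ipow_ideal (R : comPzRingType) (I : set R) n : is_ideal (ipow I n).
Proof. by case: n => [|n] /=; [exact: id_setT | exact: gen_ideal]. Qed.

Lemma ipow_dec (R : comPzRingType) (I : set R) n : ipow I n.+1 `<=` ipow I n.
Proof.
elim: n => [|n IH] //=.
apply: gen_min; first exact: gen_ideal.
move=> x [a [y [ha hy ->]]]; apply: gen_sub; exists a, y; split => //; exact: IH.
Qed.

Lemma ipow_pow (R : comPzRingType) (I : set R) b n : I b -> ipow I n (b ^+ n).
Proof.
move=> hb; elim: n => [|n IH] //=.
by apply: gen_sub; exists b, (b ^+ n); split => //; rewrite exprS.
Qed.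

Arguments ipow_ideal {R} I n.
Arguments ipow_dec {R} I n.

(* ---------- Krull's principal ideal theorem (form used here) ---------- *)
Lemma pit (R : comPzRingType) (r P s : set R) a b :
  noetherian R -> is_prime_ideal r -> is_prime_ideal P -> is_prime_ideal s ->
  r `<=` P -> P `<=` s -> P b -> ~ r b -> s a -> ~ P a ->
  (forall t, is_prime_ideal t -> r `<=` t -> t a -> t `<=` s -> s `<=` t) -> False.
Proof.
move=> N hr hP hs rP Ps Pb nrb sa nPa smin.
have hrI := prime_ideal hr; have hPI := prime_ideal hP; have hsI := prime_ideal hs.
pose Q n := sat P (addset (ipow P n) r).
have Qid : forall n, is_ideal (Q n) by move=> n; apply: sat_ideal => //; apply: addset_ideal => //; exact: ipow_ideal.
have Qsd : forall n, satd P (Q n) by move=> n; exact: sat_satd.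
have rQ : forall n, r `<=` Q n.
  move=> n; exact: subset_trans (addset_r (J:=r) (ipow_ideal P n)) (sub_sat (I:=addset (ipow P n) r) hP).
have Qdec : forall n, Q n.+1 `<=` Q n.
  move=> n; apply: sat_mono; apply: addset_min; first (apply: addset_ideal => //; exact: ipow_ideal).
    exact: subset_trans (ipow_dec P n) (addset_l (I:=ipow P n) hrI).
  exact: addset_r (ipow_ideal P n).
pose J n := sat s (addset (Q n) (mulset a)).
pose T := sat s (addset r (mulset a)).
have hT : is_ideal T by apply: sat_ideal => //; apply: addset_ideal => //; exact: mulset_ideal.
have dT : dcc s T setT.
  apply: artin => //; first exact: sat_satd.
  move=> C hC sC TC nC1.
  have [h [nh hp]] := assoc_prime N hC nC1.
  exists h; split => //; apply: smin => //.
  - move=> y ry; apply: idMr => //; apply: TC; apply: sub_sat => //.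
    by apply: addset_l => //; exact: mulset_ideal.
  - rewrite /colon /=; apply: idMr => //; apply: TC; apply: sub_sat => //.
    by apply: addset_r => //; exists 1; rewrite mul1r.
  - move=> y hy; case: (pselect (s y)) => // nsy; exfalso; apply: nh.
    exact: (sC y).
have [M hM] : exists M, forall n, (M <= n)%N -> J n = J M.
  apply: dT.
  - move=> n; split.
    + by apply: sat_ideal => //; apply: addset_ideal => //; exact: mulset_ideal.
    + exact: sat_satd.
    + apply: sat_mono; apply: addset_min; first (apply: addset_ideal => //; exact: mulset_ideal).
        by apply: subset_trans (rQ n) _; apply: addset_l; exact: mulset_ideal.
      by apply: addset_r.
    + by [].
  - move=> n; apply: sat_mono; apply: addset_min; first (apply: addset_ideal => //; exact: mulset_ideal).
      by apply: subset_trans (Qdec n) _; apply: addset_l; exact: mulset_ideal.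
    by apply: addset_r.
have eJ : J M.+1 = J M := hM _ (leqnSn M).
have QQ : Q M `<=` Q M.+1.
  have [m [g [hg eg]]] := noeth_fg N (Qid M).
  have H1 : forall i, exists t : R * (R * R),
      [/\ ~ s t.1, Q M.+1 t.2.1 & t.1 * g i = t.2.1 + t.2.2 * a].
    move=> i.
    have : J M.+1 (g i).
      rewrite eJ; apply: sub_sat => //; apply: addset_l; first exact: mulset_ideal.
      exact: hg.
    case=> u [hu [q [z [hq [y ->] e]]]].
    by exists (u, (q, y)).
  have [t ht] := choice H1.
  have hy : forall i, Q M (t i).2.2.
    move=> i; have [h1 h2 h3] := ht i.
    apply: (Qsd M a) => //; rewrite mulrC.
    have -> : (t i).2.2 * a = (t i).1 * g i - (t i).2.1 by rewrite h3 addrC addKr.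
    apply: idB; [exact: Qid | apply: idM; [exact: Qid | exact: hg] | exact: Qdec].
  have H2 : forall i, exists e : 'I_m -> R, (t i).2.2 = \sum_(j < m) e j * g j.
    move=> i; have := hy i; rewrite eg; case=> e [_ ->]; by exists e.
  have [e he] := choice H2.
  have Hrel : forall i, Q M.+1 ((t i).1 * g i - \sum_(j < m) a * e i j * g j).
    move=> i; have [h1 h2 h3] := ht i.
    have -> : \sum_(j < m) a * e i j * g j = (t i).2.2 * a.
      by rewrite (he i) mulr_suml; apply: eq_bigr => j _; rewrite [RHS]mulrC mulrA.
    by rewrite h3 addrK.
  have [d [nd hd]] := @nak R s (Q M.+1) s m g (fun i => (t i).1) (fun i j => a * e i j)
     hs (Qid _) (@subset_refl _ s) (fun i => let: And3 h _ _ := ht i in h)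
     (fun i j => idMr (e i j) hsI sa) Hrel.
  move=> x hx; apply: (Qsd _ d); first by move=> /Ps.
  move: hx; rewrite eg => -[c [_ ->]]; rewrite mulr_sumr.
  apply: id_sum => // j; rewrite mulrCA; apply: idM => //; exact: hd.
(* Step 2 : P^M is killed *)
have [m [g [hg eg]]] := noeth_fg N (ipow_ideal P M).
have PM1 : ipow P M.+1 `<=` spanA P g.
  apply: gen_min; first exact: spanA_ideal.
  move=> x [p [y [hp hy ->]]].
  have [c [_ ->]] : spanA setT g y by rewrite -eg.
  exists (fun j => p * c j); split; first by move=> j; apply: idMr.
  by rewrite mulr_sumr; apply: eq_bigr => j _; rewrite mulrA.
have H1 : forall i, exists t : R * (R * R),
    [/\ ~ P t.1, spanA P g t.2.1, r t.2.2 & t.1 * g i = t.2.1 + t.2.2].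
  move=> i.
  have : Q M.+1 (g i) by apply: QQ; apply: sub_sat => //; apply: addset_l => //; exact: hg.
  case=> u [hu [z [w [hz hw e]]]].
  by exists (u, (z, w)); split => //; apply: PM1.
have [t ht] := choice H1.
have H2 : forall i, exists c : 'I_m -> R, (forall j, P (c j)) /\ (t i).2.1 = \sum_(j < m) c j * g j.
  by move=> i; have [_ [c hc] _ _] := ht i; exists c.
have [c hc] := choice H2.
have Hrel : forall i, r ((t i).1 * g i - \sum_(j < m) c i j * g j).
  move=> i; have [h1 h2 h3 h4] := ht i.
  by rewrite -(proj2 (hc i)) h4 addrC addKr.
have [d [nd hd]] := @nak R P r P m g (fun i => (t i).1) c hP hrI (@subset_refl _ P)
   (fun i => let: And4 h _ _ _ := ht i in h) (fun i j => (proj1 (hc i)) j) Hrel.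
have hbM : ipow P M (b ^+ M) := ipow_pow M Pb.
move: hbM; rewrite eg => -[e [_ he]].
have : r (d * b ^+ M).
  rewrite he mulr_sumr; apply: id_sum => // j; rewrite mulrCA; apply: idM => //.
case/(prime_mul hr) => [/rP//|]; move/(prime_pow hr); exact: nrb.
Qed.
Definition covers (R : comPzRingType) (I : set R) (l : seq (set R)) : Prop :=
  (forall p, List.In p l -> is_prime_ideal p /\ I `<=` p) /\
  (forall q, is_prime_ideal q -> I `<=` q -> exists p, List.In p l /\ p `<=` q).

Lemma decomp (R : comPzRingType) (I : set R) :
  noetherian R -> is_ideal I -> exists l, covers I l.
Proof.
move=> N hI.
case: (pselect (exists l, covers I l)) => // nI; exfalso.
pose F (K : set R) := ~ exists l, covers K l.
have [K [hK FK _ Kmax]] := @max_elem R F I N hI nI.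
apply: FK.
case: (pselect (K 1)) => [K1|nK1].
  exists nil; split => // q hq Kq; exfalso; apply: (prime_1 hq); exact: Kq.
case: (pselect (is_prime_ideal K)) => [pK|npK].
  exists [:: K]; split.
    by move=> p [<-|//]; split.
  by move=> q hq Kq; exists K; split => //; left.
have [a [b [hab [na nb]]]] : exists a b, K (a * b) /\ ~ K a /\ ~ K b.
  case: (pselect (exists a b, K (a * b) /\ ~ K a /\ ~ K b)) => // nex; exfalso.
  apply: npK; split => //; split => // a b hab.
  case: (pselect (K a)) => [|na]; first by left.
  case: (pselect (K b)) => [|nb]; first by right.
  by exfalso; apply: nex; exists a, b.
have ext : forall c, ~ K c -> exists l, covers (addset K (mulset c)) l.
  move=> c nc; case: (pselect (exists l, covers (addset K (mulset c)) l)) => // nl.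
  exfalso; apply: nc.
  apply: (Kmax _ (addset_ideal hK (mulset_ideal c)) nl (addset_l (I:=K) (mulset_ideal c))).
  by apply: addset_r => //; exists 1; rewrite mul1r.
have [la [ca1 ca2]] := ext a na; have [lb [cb1 cb2]] := ext b nb.
exists (la ++ lb); split.
  move=> p hpl; case: (List.in_app_or _ _ _ hpl) => [/ca1|/cb1] [hp sp]; split => //.
    exact: subset_trans (addset_l (I:=K) (mulset_ideal a)) sp.
  exact: subset_trans (addset_l (I:=K) (mulset_ideal b)) sp.
move=> q hq Kq.
have [qa|qb] := prime_mul hq (Kq _ hab).
  have [p [hp pq]] : exists p, List.In p la /\ p `<=` q.
    apply: ca2 => //; apply: addset_min => //; first exact: prime_ideal.
    by move=> x [t ->]; apply: idM => //; exact: prime_ideal.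
  by exists p; split => //; apply: List.in_or_app; left.
have [p [hp pq]] : exists p, List.In p lb /\ p `<=` q.
  apply: cb2 => //; apply: addset_min => //; first exact: prime_ideal.
  by move=> x [t ->]; apply: idM => //; exact: prime_ideal.
by exists p; split => //; apply: List.in_or_app; right.
Qed.

Lemma list_min (R : Type) (l : seq (set R)) x : List.In x l ->
  exists y, [/\ List.In y l, y `<=` x & forall z, List.In z l -> z `<=` y -> y `<=` z].
Proof.
elim: l x => [//|h l IH] x.
have caseh : exists y, [/\ List.In y (h :: l), y `<=` h &
    forall z, List.In z (h :: l) -> z `<=` y -> y `<=` z].
  case: (pselect (exists z, List.In z l /\ z `<=` h)) => [[z [zl zh]]|nz].
    have [y [yl yz ymin]] := IH z zl.
    exists y; split; [by right | exact: subset_trans yz zh|].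
    move=> w [<-|wl] wy; last exact: ymin.
    exact: subset_trans yz zh.
  exists h; split; [by left | by [] |].
  move=> w [<-|wl] wh //; exfalso; apply: nz; by exists w.
move=> [<-|xl]; first exact: caseh.
have [y [yl yx ymin]] := IH x xl.
case: (pselect (h `<=` y)) => [hy|nhy].
  have [y' [y'l y'h y'min]] := caseh.
  by exists y'; split => //; apply: subset_trans y'h (subset_trans hy yx).
exists y; split => //; first by right.
move=> z [<-|zl] zy; last exact: ymin.
by exfalso; apply: nhy.
Qed.

Lemma sat_step (R : comPzRingType) (r q : set R) :
  noetherian R -> is_prime_ideal r -> is_prime_ideal q -> r `<` q ->
  exists s, [/\ is_prime_ideal s, r `<` s, s `<=` q &
    forall t, is_prime_ideal t -> r `<` t -> t `<=` s -> s `<=` t].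
Proof.
move=> N hr hq [rq nqr].
have [a [qa nra]] : exists a, q a /\ ~ r a.
  case: (pselect (exists a, q a /\ ~ r a)) => // nex; exfalso; apply: nqr => a qa.
  by case: (pselect (r a)) => // nra; exfalso; apply: nex; exists a.
have hrI := prime_ideal hr.
pose I := addset r (mulset a).
have hI : is_ideal I := addset_ideal hrI (mulset_ideal a).
have Ia : I a by apply: addset_r => //; exists 1; rewrite mul1r.
have rI : r `<=` I := addset_l (I:=r) (mulset_ideal a).
have [l [c1 c2]] := decomp N hI.
have subI : forall t, is_prime_ideal t -> r `<=` t -> t a -> I `<=` t.
  move=> t ht rt ta; apply: addset_min => //; first exact: prime_ideal.
  by move=> x [u ->]; apply: idM => //; exact: prime_ideal.
have [p [pl pq]] := c2 q hq (subI q hq rq qa).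
have [s [sl sp smin]] := list_min pl.
have [hs Is] := c1 s sl.
have minI : forall t, is_prime_ideal t -> r `<=` t -> t a -> t `<=` s -> s `<=` t.
  move=> t ht rt ta ts.
  have [p' [p'l p't]] := c2 t ht (subI t ht rt ta).
  exact: subset_trans (smin p' p'l (subset_trans p't ts)) p't.
exists s; split => //.
- split; first exact: subset_trans rI Is.
  by move=> sr; apply: nra; apply: sr; apply: Is.
- exact: subset_trans sp pq.
move=> t ht [rt ntr] ts.
case: (pselect (t a)) => [ta|nta]; first exact: minI.
have [b [tb nrb]] : exists b, t b /\ ~ r b.
  case: (pselect (exists b, t b /\ ~ r b)) => // nex; exfalso; apply: ntr => b tb.
  by case: (pselect (r b)) => // nrb; exfalso; apply: nex; exists b.
exfalso; apply: (@pit R r t s a b N hr ht hs rt ts tb nrb (Is _ Ia) nta minI).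
Qed.
Lemma phi_anti (R : comPzRingType) (phi : int -> set (Spec R)) :
  sp_filtration phi -> forall i j : int, i <= j -> phi j `<=` phi i.
Proof.
move=> [_ hdec] i j hij.
have [n ->] : exists n : nat, j = i + n%:Z.
  by exists `|j - i|%N; rewrite gez0_abs ?subr_ge0 // addrCA subrr addr0.
elim: n => [|n IH]; first by rewrite addr0.
have -> : i + n.+1%:Z = (i + n%:Z) + 1 by rewrite -addn1 PoszD addrA.
exact: subset_trans (hdec _) IH.
Qed.

Lemma chain (R : comPzRingType) (phi : int -> set (Spec R)) :
  noetherian R -> weak_cousin phi -> forall p q : Spec R, pt p `<=` pt q ->
  exists n : nat, forall j, phi j q -> phi (j - n%:Z) p.
Proof.
move=> N wc [p hp] [q hq] /= pq.
pose G (c : set R) := forall hc : is_prime_ideal c,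
  exists n : nat, forall j, phi j (exist _ q hq) -> phi (j - n%:Z) (exist _ c hc).
case: (pselect (G p)) => [g|ng]; first exact: g hp.
exfalso.
pose F (c : set R) := [/\ is_prime_ideal c, c `<=` q & ~ G c].
have [c [hcI [hc cq nG] pc cmax]] := @max_elem R F p N (prime_ideal hp) (And3 hp pq ng).
apply: nG.
case: (pselect (q `<=` c)) => [qc|nqc].
  have ec : c = q by rewrite eqEsubset.
  move: hc cq cmax pc; rewrite ec => hc' _ _ _ hc2; exists 0%N => j.
  by rewrite subr0 (Prop_irrelevance hc2 hq).
have [s [hs cs sq ssat]] := @sat_step R c q N hc hq (conj cq nqc).
have Gs : G s.
  case: (pselect (G s)) => // nGs; exfalso.
  have := cmax s (prime_ideal hs) (And3 hs sq nGs) (proj1 cs).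
  by move: cs => [_ ?].
move=> hc'; have [n hn] := Gs hs; exists n.+1 => j Hj.
have -> : j - n.+1%:Z = (j - n%:Z) - 1 by rewrite -addn1 PoszD opprD addrA.
apply: (wc (j - n%:Z) (exist _ c hc') (exist _ s hs)); last exact: hn.
split => //= -[[t ht] /= [ct ts]].
by move: ts => [ts nst]; apply: nst; apply: ssat.
Qed.

Lemma avoid (R : comPzRingType) (q : set R) (l : seq (set R)) (Sel : set R -> Prop) :
  is_prime_ideal q ->
  (forall p, List.In p l -> is_prime_ideal p) ->
  (forall p, List.In p l -> Sel p -> ~ p `<=` q) ->
  exists x, ~ q x /\ forall p, List.In p l -> Sel p -> p x.
Proof.
move=> hq; elim: l => [|h l IH] hl hn.
  by exists 1; split => //; exact: prime_1.
have [x [nqx hx]] := IH (fun p pl => hl p (or_intror pl)) (fun p pl => hn p (or_intror pl)).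
case: (pselect (Sel h)) => [sh|nsh].
  have [y [hy nqy]] : exists y, h y /\ ~ q y.
    case: (pselect (exists y, h y /\ ~ q y)) => // nex; exfalso.
    apply: (hn h (or_introl erefl) sh) => y hy.
    by case: (pselect (q y)) => // nqy; exfalso; apply: nex; exists y.
  exists (y * x); split; first exact: prime_mulN.
  move=> p [<-|pl] sp; first by apply: idMr => //; exact: prime_ideal (hl h (or_introl erefl)).
  by apply: idM; [exact: prime_ideal (hl p (or_intror pl)) | exact: hx].
exists x; split => // p [<-|pl] sp; [by exfalso | exact: hx].
Qed.

Lemma closed_sel (R : comPzRingType) (l : seq (set R)) (Sel : set R -> Prop) :
  (forall p, List.In p l -> is_prime_ideal p) ->
  zariski_closed [set q : Spec R | exists p, [/\ List.In p l, Sel p & p `<=` pt q]].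
Proof.
move=> hl.
exists [set x | forall p, List.In p l -> Sel p -> p x].
rewrite eqEsubset; split => q.
  by move=> [p [pl sp pq]] x hx; apply: pq; exact: hx.
move=> Iq.
case: (pselect (exists p, [/\ List.In p l, Sel p & p `<=` pt q])) => // nex; exfalso.
have [x [nqx hx]] := @avoid R (pt q) l Sel (proj2_sig q) hl
  (fun p pl sp pq => nex (ex_intro _ p (And3 pl sp pq))).
by apply: nqx; apply: Iq.
Qed.

Lemma clopen_of (R : comPzRingType) (S : set (Spec R)) : noetherian R ->
  (forall p q : Spec R, S p -> pt p `<=` pt q -> S q) ->
  (forall p q : Spec R, S q -> pt p `<=` pt q -> S p) ->
  zariski_clopen S.
Proof.
move=> N hsp hgen.
have [l [c1 c2]] := decomp N (mulset_ideal (0 : R)).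
have hl : forall p, List.In p l -> is_prime_ideal p by move=> p /c1 [].
have cov : forall q : Spec R, exists p, List.In p l /\ p `<=` pt q.
  move=> q; apply: c2; first exact: (proj2_sig q).
  move=> x [r ->]; rewrite mulr0; exact: id0 (prime_ideal (proj2_sig q)).
pose PS (p : set R) := exists hp : is_prime_ideal p, S (exist _ p hp).
split.
- rewrite /zariski_open.
  have -> : ~` S = [set q : Spec R | exists p, [/\ List.In p l, ~ PS p & p `<=` pt q]].
    rewrite eqEsubset; split => q.
      move=> nSq; have [p [pl pq]] := cov q; exists p; split => //.
      by move=> [hp Sp]; apply: nSq; apply: hsp Sp _.
    move=> [p [pl nps pq]] Sq; apply: nps; exists (hl p pl); exact: hgen Sq _.
  exact: closed_sel.
- have -> : S = [set q : Spec R | exists p, [/\ List.In p l, PS p & p `<=` pt q]].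
    rewrite eqEsubset; split => q.
      move=> Sq; have [p [pl pq]] := cov q; exists p; split => //.
      by exists (hl p pl); apply: hgen Sq _.
    by move=> [p [pl [hp Sp] pq]]; apply: hsp Sp _.
  exact: closed_sel.
Qed.

Lemma list_bound (R : comPzRingType) (phi : int -> set (Spec R)) (l : seq (set R)) :
  sp_filtration phi ->
  exists j0, forall p (hp : is_prime_ideal p), List.In p l ->
    (exists j, phi j (exist _ p hp)) -> phi j0 (exist _ p hp).
Proof.
move=> hphi; have anti := phi_anti hphi.
elim: l => [|h l [j1 IH]]; first by exists 0.
case: (pselect (exists hh : is_prime_ideal h, exists j, phi j (exist _ h hh))) => [[hh [jh Hh]]|nh].
  exists (if jh <= j1 then jh else j1) => p hp [ep|pl] ex.
    move: hp ex; rewrite -ep => hp ex; rewrite (Prop_irrelevance hp hh).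
    apply: anti _ _ _ _ Hh; case: ifP => // /negbT; rewrite -ltNge => /ltW //.
  apply: anti _ _ _ _ (IH p hp pl ex); case: ifP => //.
exists j1 => p hp [ep|pl] ex; last exact: IH.
by exfalso; apply: nh; move: hp ex; rewrite -ep => hp ex; exists hp.
Qed.

Unset Implicit Arguments.

Theorem proposition4p9 (R : comPzRingType) (phi : int -> set (Spec R)) :
  noetherian R -> sp_filtration phi -> weak_cousin phi ->
  (exists j0 : int,
      (forall j : int, j <= j0 -> phi j = phi j0) /\ zariski_clopen (phi j0)) /\
  zariski_clopen (\bigcap_(i in [set: int]) phi i).
Proof.
move=> N hphi wc.
have [hsp hdec] := hphi.
have anti := phi_anti hphi.
have gen := chain N wc.
split; last first.
  apply: clopen_of => //.
  - move=> p q Sp pq i _; exact: hsp i p q (Sp i I) pq.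
  - move=> p q Sq pq i _; have [n hn] := gen p q pq.
    by have := hn (i + n%:Z) (Sq _ I); rewrite addrK.
have [l [c1 c2]] := decomp N (mulset_ideal (0 : R)).
have hl : forall p, List.In p l -> is_prime_ideal p by move=> p /c1 [].
have cov : forall q : Spec R, exists p, List.In p l /\ p `<=` pt q.
  move=> q; apply: c2; first exact: (proj2_sig q).
  move=> x [r ->]; rewrite mulr0; exact: id0 (prime_ideal (proj2_sig q)).
have [j0 hj0] := list_bound l hphi.
exists j0.
have all : forall j, phi j `<=` phi j0.
  move=> j q Hq; have [p [pl pq]] := cov q.
  have [n hn] := gen (exist _ p (hl p pl)) q pq.
  apply: (hsp j0 (exist _ p (hl p pl)) q) => //.
  by apply: hj0 => //; exists (j - n%:Z); exact: hn.
split.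
  move=> j hj; rewrite eqEsubset; split; [exact: all | exact: anti].
apply: clopen_of => //.
- exact: hsp.
- move=> p q Sq pq; have [n hn] := gen p q pq; exact: all _ _ (hn _ Sq).
Qed.
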